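(* For every graph $G$ on $n$ vertices and every finite field $\mathbb{F}$ of size $q$, \[\mathrm{minrk}_{\mathbb{F}}(G)\le \overline{\xi}_l(\overline{G},\mathbb{F})+\lceil\log_q n\rceil.\] In particular, $\mathrm{minrk}_{\mathbb{F}_2}(G)\le \overline{\xi}_l(\overline{G},\mathbb{F}_2)+\lceil\log_2 n\rceil$.
   Context: $\overline{G}$ is the complement of $G$. For a graph $H$ on $[n]$, a matrix $M\in\mathbb{F}^{n\times n}$ represents $H$ if $M_{i,i}\ne0$ for all $i$ and $M_{i,j}=0$ for distinct non-adjacent $i,j$; $\mathrm{minrk}_{\mathbb{F}}(H)$ is the minimum rank over $\mathbb{F}$ of such a matrix. An orthogonal representation of $H=(V,E)$ over $\mathbb{F}$ assigns $u_v\in\mathbb{F}^t$ to each $v$ with $\langle u_v,u_v\rangle\ne0$ and $\langle u_v,u_{v'}\rangle=0$ for adjacent $v,v'$, where $\langle x,y\rangle=\sum_i x_iy_i$. Its locality is $\max_v\dim\mathrm{span}\{u_{v'}:v'\in\{v\}\cup N(v)\}$ with $N(v)$ the neighborhood of $v$; $\overline{\xi}_l(H,\mathbb{F})$ is the minimum locality of an orthogonal representation of $H$ over $\mathbb{F}$. *)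

(* Defs.v *)
From mathcomp Require Import all_boot all_order all_algebra all_field.
From Stdlib Require Import ClassicalEpsilon.
Set Implicit Arguments. Unset Strict Implicit. Unset Printing Implicit Defensive.
Import GRing.Theory.
Local Open Scope ring_scope.

Definition simple_graph (n : nat) (G : rel 'I_n) : Prop :=
  symmetric G /\ irreflexive G.

Definition compl_graph (n : nat) (G : rel 'I_n) : rel 'I_n :=
  fun i j => (i != j) && ~~ G i j.

Definition represents (F : fieldType) (n : nat) (H : rel 'I_n) (M : 'M[F]_n) : bool :=
  [forall i, M i i != 0] && [forall i, forall j, ((i != j) && ~~ H i j) ==> (M i j == 0)].

(* minrk_F(H): minimum rank of a matrix representing H (the identity represents H
   and has rank n, so n is a valid default for the min). *)
Definition minrk (F : finFieldType) (n : nat) (H : rel 'I_n) : nat :=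
  \big[minn/n]_(M : 'M[F]_n | represents H M) \rank M.

Definition bil (F : fieldType) (t : nat) (x y : 'rV[F]_t) : F :=
  \sum_(i < t) x 0 i * y 0 i.

Definition orth_rep (F : fieldType) (n t : nat) (H : rel 'I_n) (u : 'I_n -> 'rV[F]_t) : Prop :=
  (forall v, bil (u v) (u v) != 0) /\ (forall v v', v != v' -> H v v' -> bil (u v) (u v') = 0).

(* dim span {u_v' : v' in {v} ∪ N(v)} = rank of the matrix with these rows (others 0) *)
Definition local_dim (F : fieldType) (n t : nat) (H : rel 'I_n) (u : 'I_n -> 'rV[F]_t) (v : 'I_n) : nat :=
  \rank (\matrix_(i < n) (if (i == v) || H v i then u i else 0)).

Definition locality (F : fieldType) (n t : nat) (H : rel 'I_n) (u : 'I_n -> 'rV[F]_t) : nat :=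
  (\max_(v : 'I_n) local_dim H u v)%N.

Definition has_orth_rep_of_locality (F : fieldType) (n : nat) (H : rel 'I_n) (k : nat) : Prop :=
  exists t (u : 'I_n -> 'rV[F]_t), orth_rep H u /\ locality H u = k.

Definition orth_locb (F : fieldType) (n : nat) (H : rel 'I_n) (k : nat) : bool :=
  if excluded_middle_informative (has_orth_rep_of_locality F H k) then true else false.

Lemma exists_orth_rep (F : fieldType) (n : nat) (H : rel 'I_n) :
  exists k, orth_locb F H k.
Proof.
pose u := fun v : 'I_n => (delta_mx 0 v : 'rV[F]_n).
have bE : forall v w, bil (u v) (u w) = (v == w)%:R.
  move=> v w; rewrite /bil (bigD1 v) //= big1 => [|i /negbTE Hi].
    by rewrite !mxE !eqxx /= mul1r addr0 eq_sym.
  by rewrite !mxE Hi /= mul0r.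
exists (locality H u); rewrite /orth_locb.
case: excluded_middle_informative => // [[]]; exists n, u; split=> //; split.
  by move=> v; rewrite bE eqxx oner_neq0.
by move=> v v' /negbTE nv _; rewrite bE nv.
Qed.

Definition xi_l (F : fieldType) (n : nat) (H : rel 'I_n) : nat :=
  ex_minn (exists_orth_rep F H).

(* Main.v *)
Require Import Defs.
From mathcomp Require Import all_boot all_order all_algebra all_field.
From mathcomp Require Import zify.
From Stdlib Require Import ClassicalEpsilon.
Set Implicit Arguments. Unset Strict Implicit. Unset Printing Implicit Defensive.
Import GRing.Theory.
Local Open Scope ring_scope.

Lemma ker_count (F : finFieldType) t r (y : 'rV[F]_t) : y != 0 ->
  (#|[set P : 'M[F]_(t,r) | y *m P == 0%R]| * #|F|^r <= #|F|^(t*r))%N.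
Proof.
case/rV0Pn=> j yj.
pose E (z : 'rV[F]_r) : 'M[F]_(t,r) :=
  \matrix_(a, b) (if a == j then (y 0 j)^-1 * z 0 b else 0).
have yE z : y *m E z = z.
  apply/rowP=> b; rewrite !mxE (bigD1 j) //= big1 => [|a /negbTE na]; last first.
    rewrite mxE na mulr0. by [].
  by rewrite mxE eqxx mulrA mulfV // mul1r addr0.
set K := [set P | _].
have -> : (#|F| ^ r = #|[set: 'rV[F]_r]|)%N by rewrite cardsT card_mx mul1n.
rewrite -cardsX -card_mx.
pose f (p : 'M[F]_(t,r) * 'rV[F]_r) := p.1 + E p.2.
rewrite -(card_in_imset (f := f)); first exact: max_card.
move=> [P1 z1] [P2 z2]; rewrite !inE /= => /andP[/eqP h1 _] /andP[/eqP h2 _] /= e.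
have ez : z1 = z2.
  by move: (congr1 (mulmx y) e); rewrite /f /= !mulmxDr h1 h2 !add0r !yE.
by move: e; rewrite /f /= ez => /addIr ->.
Qed.

Lemma good_exists (F : finFieldType) (n t r k : nat) (d : 'I_n -> nat)
  (B : forall v, 'M[F]_(d v, t)) :
  (forall v, d v <= k)%N -> (n * (#|F| ^ k - 1) < #|F| ^ r)%N ->
  exists P : 'M[F]_(t, r), forall v (c : 'rV_(d v)),
     (c *m B v != 0)%R -> (c *m B v *m P != 0)%R.
Proof.
move=> dk nk.
have q1 : (1 < #|F|)%N := card_finNzRing_gt1 F.
pose bad (P : 'M[F]_(t,r)) := [exists v, exists c : 'rV_(d v), (c *m B v != 0)%R && (c *m B v *m P == 0)%R].
suff : [exists P, ~~ bad P].
  case/existsP=> P /existsPn hP; exists P => v c h.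
  have /existsPn /(_ c) := hP v.
  by rewrite h.
case: (boolP [exists P, ~~ bad P]) => // /existsPn allbad; exfalso.
have e1 : (#|F| ^ (t * r) = \sum_(P : 'M[F]_(t,r)) bad P)%N.
  by rewrite -card_mx -sum1_card; apply: eq_bigr => P _; rewrite (negPn (allbad P)).
have e2 : (\sum_(P : 'M[F]_(t,r)) bad P <= \sum_v \sum_(c : 'rV_(d v) | (c *m B v != 0)%R)
             #|[set P : 'M[F]_(t,r) | c *m B v *m P == 0%R]|)%N.

  apply: leq_trans (_ : \sum_P \sum_v \sum_(c : 'rV_(d v) | (c *m B v != 0)%R) (c *m B v *m P == 0%R : nat) <= _)%N.
    apply: leq_sum => P _; case: (boolP (bad P)) => // /existsP [v /existsP [c /andP [h1 h2]]].
    rewrite (bigD1 v) //= (bigD1 c) //= h2; lia.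
  rewrite exchange_big /=; apply: leq_sum => v _.
  rewrite exchange_big /=; apply: leq_sum => c _.
  rewrite cardsE -sum1_card [in X in (_ <= X)%N]big_mkcond /=; apply: leq_sum => P _.
  by rewrite [P \in _](_ : _ = (c *m B v *m P == 0)) //; case: (_ == _).
have e3 : forall v, (#|[pred c : 'rV[F]_(d v) | (c *m B v != 0)%R]| <= #|F| ^ k - 1)%N.
  move=> v; apply: leq_trans (_ : #|predC1 (0 : 'rV[F]_(d v))%R| <= _)%N.
    by apply: subset_leq_card; apply/subsetP => c; rewrite !inE; apply: contra => /eqP ->; rewrite mul0mx.
  rewrite cardC1 card_mx mul1n -subn1 leq_sub2r // leq_pexp2l ?dk //; by apply: ltn_trans q1.
have e4 : ((\sum_v \sum_(c : 'rV_(d v) | (c *m B v != 0)%R)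
             #|[set P : 'M[F]_(t,r) | c *m B v *m P == 0%R]|) * #|F| ^ r
          <= n * (#|F| ^ k - 1) * #|F| ^ (t * r))%N.
  rewrite big_distrl -mulnA -[n in (_ <= n * _)%N]card_ord -sum_nat_const.
  apply: leq_sum => v _; rewrite big_distrl /=.
  apply: leq_trans (_ : \sum_(c : 'rV_(d v) | (c *m B v != 0)%R) #|F| ^ (t * r) <= _)%N.
    by apply: leq_sum => c h; apply: ker_count.
  rewrite sum_nat_const leq_mul2r e3 orbT //.
have := leq_mul (leq_trans (eq_leq e1) e2) (leqnn (#|F| ^ r)).
move/leq_trans/(_ e4).
have : (0 < #|F| ^ (t * r))%N by rewrite expn_gt0; lia.
nia.
Qed.

Lemma bil_sym (F : fieldType) t (x y : 'rV[F]_t) : bil x y = bil y x.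
Proof. by apply: eq_bigr => i _; rewrite mulrC. Qed.

Lemma bilE (F : fieldType) t (x y : 'rV[F]_t) : bil x y = (x *m y^T) 0 0.
Proof. by rewrite /bil mxE; apply: eq_bigr => i _; rewrite mxE. Qed.

Lemma bigmin_le (I : finType) (P : pred I) (f : I -> nat) d i :
  P i -> (\big[minn/d]_(j | P j) f j <= f i)%N.
Proof.
move=> Pi; rewrite -big_filter.
have : i \in [seq j <- index_enum I | P j] by rewrite mem_filter Pi mem_index_enum.
elim: [seq j <- _ | _] => //= a s IH; rewrite big_cons in_cons.
case/orP=> [/eqP ->|/IH h]; first exact: geq_minl.
exact: leq_trans (geq_minr _ _) h.
Qed.

Theorem mainTheorem13 (F : finFieldType) (n : nat) (G : rel 'I_n) :
  simple_graph G ->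
  (minrk F G <= xi_l F (compl_graph G) + up_log #|F| n)%N.
Proof.
move=> _.
have q1 : (1 < #|F|)%N := card_finNzRing_gt1 F.
set H := compl_graph G.
rewrite /xi_l; case: ex_minnP => k Hk _.
move: Hk; rewrite /orth_locb; case: excluded_middle_informative => //.
move=> [t [u [[hdiag horth] hloc]]] _.
set m := up_log #|F| n; set r := (k + m)%N.
pose L v := \matrix_(i < n) (if (i == v) || H v i then u i else 0) : 'M[F]_(n,t).
pose B v := row_base (L v).
have rk v : (\rank (L v) <= k)%N.
  by rewrite -hloc; exact: (leq_bigmax (F := fun v => local_dim H u v) v).
have nk : (n * (#|F| ^ k - 1) < #|F| ^ r)%N.
  have := up_logP n q1; rewrite -/m expnD.
  have : (0 < #|F| ^ k)%N by by rewrite expn_gt0 (ltnW q1).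
  have : (0 < #|F| ^ m)%N by by rewrite expn_gt0 (ltnW q1).
  nia.
have [P goodP] := good_exists B rk nk.
pose BP v := B v *m P.
have freeBP v : row_free (BP v).
  apply: inj_row_free => c; rewrite /BP mulmxA => /eqP h.
  apply: (row_free_inj (row_base_free (L v))); rewrite mul0mx.
  by apply/eqP; move: h; apply: contraLR; apply: goodP.
pose x v : 'cV[F]_r := (((B v *m (u v)^T)^T) *m pinvmx ((BP v)^T))^T.
have xE v : BP v *m x v = B v *m (u v)^T.
  apply: trmx_inj; rewrite trmx_mul trmxK mulmxKpV //.
  apply: submx_full; move: (freeBP v); by rewrite /row_full /row_free mxrank_tr.
have uxE v w : (w == v) || H v w -> u w *m P *m x v = u w *m (u v)^T.
  move=> hw.
  have : (u w <= B v)%MS.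
    rewrite eq_row_base; have <- : row w (L v) = u w.
      by apply/rowP => j; rewrite !mxE hw.
    exact: row_sub.
  case/submxP => D ->.
  by rewrite -(mulmxA D (B v) P) -(mulmxA D) xE mulmxA.
pose X : 'M[F]_(n, r) := \matrix_(v, j) x v j 0.
pose Y : 'M[F]_(r, n) := \matrix_(j, w) (u w *m P) 0 j.
have ME v w : (X *m Y) v w = (u w *m P *m x v) 0 0.
  by rewrite !mxE; apply: eq_bigr => j _; rewrite !mxE mulrC.
have rep : represents G (X *m Y).
  apply/andP; split.
    apply/forallP => v; rewrite ME uxE ?eqxx // -bilE; exact: hdiag.
  apply/forallP => v; apply/forallP => w; apply/implyP => hvw.
  have hH : H v w by [].
  rewrite ME uxE ?hH ?orbT // -bilE bil_sym horth //.
  by case/andP: hvw.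
rewrite /minrk; apply: leq_trans (bigmin_le (fun M : 'M[F]_n => \rank M) n rep) _.
exact: mulmx_max_rank.
Qed.
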